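(* Let $t\ge0$ and $b\in\mathcal B_{[2t]}$. Then $b^e\in\mathcal B_{[2t]}$, and: (i) $Q_1(b)=Q_1(b^e)$; (ii) $Q_1\big(Q_1(b)^e\big)=b+b^e$; (iii) $P\big(Q_1(b)^e\big)=Q_1(b)$; (iv) $P(b)=0=P(b^e)$; (v) $Q_1\big(Q_1(b\,x_{2t+1})^e\big)=Q_1(b\,x_{2t+1})$; (vi) $P\big(Q_1(b\,x_{2t+1})\big)=0$; (vii) $P\big(Q_1(b\,x_{2t+1})^e\big)=0$.
   Context: Over $\mathbb F_2$, $R=\Lambda(t_i:i\ge1)\otimes\Lambda(x_i:i\ge1)$ with basis the monomials $t_Ix_J$ ($I,J\subset\mathbb N_+$ finite, $t_I=\prod_{i\in I}t_i$, $x_J=\prod_{j\in J}x_j$, $t_It_K=0$ if $I\cap K\neq\emptyset$), with linear operators $Q_1(t_Ix_J)=\sum_{j\in J}t_jt_Ix_{J\setminus\{j\}}$ and $P(t_Ix_J)=\sum_{K\subseteq J,|K|=2}t_Kt_Ix_{J\setminus K}$. The exchange operation is the linear map $(-)^e:R\to R$, $(t_Ix_J)^e=t_Jx_I$ (interchanging $t_i$ and $x_i$). The sets $\mathcal B_{[n]}\subset R$ are defined inductively: $\mathcal B_{[0]}=\{1\}$; given $\mathcal B_{[2t]}$, $\mathcal B_{[2t+1]}=\{Q_1(b\,x_{2t+1}):b\in\mathcal B_{[2t]}\}\cup\{Q_1(b\,x_{2t+1})^e:b\in\mathcal B_{[2t]}\}$ and $\mathcal B_{[2t+2]}=\{Q_1(b\,x_{2t+1})\,x_{2t+2}:b\in\mathcal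 B_{[2t]}\}\cup\{Q_1(b\,x_{2t+1})^e\,t_{2t+2}:b\in\mathcal B_{[2t]}\}$ (products taken in $R$). *)

(* Defs.v *)
From mathcomp Require Import all_boot.
Set Implicit Arguments. Unset Strict Implicit. Unset Printing Implicit Defensive.

(* The F_2-algebra R = Lambda(t_i) (x) Lambda(x_i).
   A monomial t_I x_J is encoded by the pair (I, J) of finite sets of
   positive naturals, each represented canonically as a strictly increasing
   list.  An element of R is a finite list of monomials, read as their sum
   over F_2: the coefficient of a monomial m is the parity of its number of
   occurrences. *)

Definition mono := (seq nat * seq nat)%type.
Definition elt := seq mono.

Definition coef (f : elt) (m : mono) : bool := odd (count_mem m f).
Definition eqR (f g : elt) : Prop := forall m : mono, coef f m = coef g m.
Notation "f =R g" := (eqR f g) (at level 70, no associativity).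

Definition zeroR : elt := [::].
Definition oneR : elt := [:: ([::], [::])].
Definition addR (f g : elt) : elt := f ++ g.
Definition tv (i : nat) : elt := [:: ([:: i], [::])].
Definition xv (i : nat) : elt := [:: ([::], [:: i])].

Definition disj (I K : seq nat) : bool := all (fun i => i \notin K) I.

(* product of monomials: t_I x_J * t_K x_L (zero if the t's or x's overlap;
   no signs over F_2) *)
Definition mulm (a b : mono) : option mono :=
  if disj a.1 b.1 && disj a.2 b.2
  then Some (sort leq (a.1 ++ b.1), sort leq (a.2 ++ b.2)) else None.

Definition mulR (f g : elt) : elt := pmap id [seq mulm a b | a <- f, b <- g].

(* Q_1(t_I x_J) = sum_{j in J} t_j t_I x_{J \ j}  (t_j t_I = 0 if j in I) *)
Definition Q1m (m : mono) : elt :=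
  [seq (sort leq (j :: m.1), rem j m.2) | j <- [seq j <- m.2 | j \notin m.1]].
Definition Q1 (f : elt) : elt := flatten (map Q1m f).

Definition pairs2 (J : seq nat) : seq (seq nat) :=
  [seq [:: a; b] | a <- J, b <- [seq b <- J | a < b]].

Definition Pm (m : mono) : elt :=
  [seq (sort leq (K ++ m.1), [seq j <- m.2 | j \notin K])
  | K <- [seq K <- pairs2 m.2 | disj K m.1]].
Definition P (f : elt) : elt := flatten (map Pm f).

Definition ex (f : elt) : elt := [seq (m.2, m.1) | m <- f].

Fixpoint Beven (t : nat) : seq elt :=
  match t with
  | 0 => [:: oneR]
  | t'.+1 =>
      [seq mulR (Q1 (mulR b (xv t'.*2.+1))) (xv t'.*2.+2) | b <- Beven t'] ++
      [seq mulR (ex (Q1 (mulR b (xv t'.*2.+1)))) (tv t'.*2.+2) | b <- Beven t']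
  end.

Definition Bodd (t : nat) : seq elt :=
  [seq Q1 (mulR b (xv t.*2.+1)) | b <- Beven t] ++
  [seq ex (Q1 (mulR b (xv t.*2.+1))) | b <- Beven t].

Definition B (n : nat) : seq elt := if odd n then Bodd n./2 else Beven n./2.

Definition inB (n : nat) (f : elt) : Prop := exists2 g, g \in B n & f =R g.

(* Main.v *)
Require Import Defs.
From mathcomp Require Import all_boot.

Definition xs (F : mono -> bool) (f : elt) : bool := foldr (fun a acc => F a (+) acc) false f.

Lemma coefD f g m : coef (f ++ g) m = coef f m (+) coef g m.
Proof. by rewrite /coef count_cat oddD. Qed.

Lemma coef_flatten (h : mono -> elt) f m :
  coef (flatten (map h f)) m = xs (fun a => coef (h a) m) f.
Proof. by elim: f => [|a f IH] //=; rewrite coefD IH. Qed.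

Lemma eq_xs F G s : F =1 G -> xs F s = xs G s.
Proof. by move=> FG; elim: s => //= a s ->; rewrite FG. Qed.

Lemma xs_add F G s : xs (fun y => F y (+) G y) s = xs F s (+) xs G s.
Proof.
elim: s => //= a s ->.
by case: (F a); case: (G a); case: (xs F s); case: (xs G s).
Qed.

Lemma xs_false s : xs (fun _ => false) s = false.
Proof. by elim: s. Qed.

Lemma xs_pick (x : mono) F U : x \notin U -> xs (fun y => (x == y) && F y) U = false.
Proof.
elim: U => //= u U IH; rewrite in_cons negb_or => /andP[xu xU].
by rewrite IH // (negbTE xu).
Qed.

Lemma xs_pick1 (x : mono) F U : uniq U -> x \in U -> xs (fun y => (x == y) && F y) U = F x.
Proof.
elim: U => //= u U IH /andP[uU Uu]; rewrite in_cons.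
case: (eqVneq x u) => [->|xu] /=.
  by move=> _; rewrite xs_pick //; case: (F u).
by move=> xU; rewrite IH.
Qed.

Lemma xs_coef F (U s : elt) : uniq U -> {subset s <= U} ->
  xs F s = xs (fun y => coef s y && F y) U.
Proof.
move=> Uu; elim: s => [|x s IH] sU /=.
  by elim: U {Uu sU} => //= u U <-.
rewrite IH; last by move=> y ys; apply: sU; rewrite in_cons ys orbT.
rewrite -(@xs_pick1 x F U Uu (sU x (mem_head _ _))) -xs_add; apply: eq_xs => y.
rewrite /coef /= oddD oddb.
by case: (x == y); case: (odd _); case: (F y).
Qed.

Lemma congL (h : mono -> elt) f g : f =R g -> flatten (map h f) =R flatten (map h g).
Proof.
move=> fg m; rewrite !coef_flatten.
have Uu := undup_uniq (f ++ g).
rewrite (@xs_coef _ _ f Uu); last by move=> y yf; rewrite mem_undup mem_cat yf.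
rewrite (@xs_coef _ _ g Uu); last by move=> y yf; rewrite mem_undup mem_cat yf orbT.
by apply: eq_xs => y; rewrite fg.
Qed.

Lemma eqR_refl f : f =R f. Proof. by []. Qed.
Lemma eqR_sym f g : f =R g -> g =R f. Proof. by move=> h m; rewrite h. Qed.
Lemma eqR_trans f g h : f =R g -> g =R h -> f =R h.
Proof. by move=> a b m; rewrite a b. Qed.

Lemma perm_eqR f g : perm_eq f g -> f =R g.
Proof. by move/permP=> h m; rewrite /coef h. Qed.

Lemma congD f f' g g' : f =R f' -> g =R g' -> f ++ g =R f' ++ g'.
Proof. by move=> a b m; rewrite !coefD a b. Qed.

Lemma congMap (h : mono -> mono) f g : f =R g -> map h f =R map h g.
Proof. by move=> fg; rewrite -(flatten_map1 h f) -(flatten_map1 h g); apply: congL. Qed.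

Lemma congQ1 f g : f =R g -> Q1 f =R Q1 g. Proof. exact: congL. Qed.
Lemma congP f g : f =R g -> P f =R P g. Proof. exact: congL. Qed.
Lemma congex f g : f =R g -> ex f =R ex g. Proof. exact: congMap. Qed.

Lemma Q1_cat f g : Q1 (f ++ g) = Q1 f ++ Q1 g.
Proof. by rewrite /Q1 map_cat flatten_cat. Qed.
Lemma P_cat f g : P (f ++ g) = P f ++ P g.
Proof. by rewrite /P map_cat flatten_cat. Qed.
Lemma ex_cat f g : ex (f ++ g) = ex f ++ ex g.
Proof. by rewrite /ex map_cat. Qed.
Lemma ex_ex f : ex (ex f) = f.
Proof. by rewrite /ex -map_comp map_id_in // => -[]. Qed.

Lemma perm_flatten_cat (S : Type) (U : eqType) (A B : S -> seq U) (s : seq S) :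
  perm_eq (flatten (map (fun a => A a ++ B a) s)) (flatten (map A s) ++ flatten (map B s)).
Proof.
elim: s => //= a s IH.
rewrite -!catA perm_cat2l; apply: (perm_trans (perm_cat (perm_refl (B a)) IH)).
by rewrite perm_catCA.
Qed.

Definition wfm k (m : mono) := [&& sorted ltn m.1, sorted ltn m.2,
  all (fun i => i < k) m.1 & all (fun i => i < k) m.2].
Definition wf k (f : elt) := all (wfm k) f.
Definition xk k (m : mono) : mono := (m.1, rcons m.2 k).
Definition tk k (m : mono) : mono := (rcons m.1 k, m.2).
Definition X k (f : elt) : elt := map (xk k) f.
Definition T k (f : elt) : elt := map (tk k) f.

Lemma sort_perm s1 s2 : perm_eq s1 s2 -> sort leq s1 = sort leq s2.
Proof. by move=> p; apply/(perm_sortP leq_total leq_trans anti_leq). Qed.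

Lemma lt_sorted_leq s : sorted ltn s -> sorted leq s.
Proof. by rewrite ltn_sorted_uniq_leq => /andP[]. Qed.

Lemma sort_id s : sorted ltn s -> sort leq s = s.
Proof. by move=> h; apply: (sorted_sort leq_trans); apply: lt_sorted_leq. Qed.

Lemma sorted_rcons_lt s k : sorted ltn s -> all (fun i => i < k) s -> sorted ltn (rcons s k).
Proof.
rewrite !(sorted_pairwise ltn_trans) -cats1 pairwise_cat => -> sk /=.
rewrite andbT /allrel; apply: sub_all sk => i /= ->; by [].
Qed.

Lemma sorted_rcons_le s k : sorted leq s -> all (fun i => i <= k) s -> sorted leq (rcons s k).
Proof.
rewrite !(sorted_pairwise leq_trans) -cats1 pairwise_cat => -> sk /=.
rewrite andbT /allrel; apply: sub_all sk => i /= ->; by [].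
Qed.

Lemma notin_lt s k : all (fun i => i < k) s -> k \notin s.
Proof. by move=> h; apply/negP => /(allP h); rewrite ltnn. Qed.

Lemma sort_rcons s k : all (fun i => i < k) s -> sort leq (rcons s k) = rcons (sort leq s) k.
Proof.
move=> h; rewrite (@sort_perm _ (rcons (sort leq s) k)); last first.
  by rewrite perm_rcons perm_sym perm_rcons perm_cons ?perm_sort // perm_sym perm_sort.
apply: (sorted_sort leq_trans); apply: sorted_rcons_le; first exact: (sort_sorted leq_total).
by apply/allP => i; rewrite mem_sort => /(allP h) /ltnW.
Qed.

Lemma rem_rcons_notin (k : nat) (J : seq nat) : k \notin J -> rem k (rcons J k) = J.
Proof.
elim: J => [|a J IH] /=; first by rewrite eqxx.
rewrite in_cons negb_or => /andP[ka kJ]; rewrite eq_sym (negbTE ka) IH //.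
Qed.

Lemma rem_rcons_in (j k : nat) (J : seq nat) : j \in J -> rem j (rcons J k) = rcons (rem j J) k.
Proof.
elim: J => [|a J IH] //=; rewrite in_cons.
by case: (eqVneq a j) => [<-|aj] //= jJ; rewrite IH.
Qed.

Lemma mulm_x k (m : mono) : wfm k m -> mulm m ([::], [:: k]) = Some (xk k m).
Proof.
case: m => I J /and4P[sI sJ aI aJ]; rewrite /mulm /=.
have -> : disj I [::] by apply/allP => i _; rewrite in_nil.
have -> : disj J [:: k] by apply/allP => i /(allP aJ) ik; rewrite in_cons in_nil orbF ltn_eqF.
by rewrite cats0 cats1 sort_rcons // !sort_id.
Qed.

Lemma mulm_t k (m : mono) : wfm k m -> mulm m ([:: k], [::]) = Some (tk k m).
Proof.
case: m => I J /and4P[sI sJ aI aJ]; rewrite /mulm /=.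
have -> : disj J [::] by apply/allP => i _; rewrite in_nil.
have -> : disj I [:: k] by apply/allP => i /(allP aI) ik; rewrite in_cons in_nil orbF ltn_eqF.
by rewrite cats0 cats1 sort_rcons // !sort_id.
Qed.

Lemma mulR_x k f : wf k f -> mulR f (xv k) = X k f.
Proof.
elim: f => //= a f IH /andP[wa wf].
by rewrite /mulR /= mulm_x //= -IH.
Qed.

Lemma mulR_t k f : wf k f -> mulR f (tv k) = T k f.
Proof.
elim: f => //= a f IH /andP[wa wf].
by rewrite /mulR /= mulm_t //= -IH.
Qed.
Arguments notin_lt {s k}.
Arguments sort_rcons {s k}.
Arguments sorted_rcons_lt {s k}.

Lemma all_ltS k (s : seq nat) : all (fun i => i < k) s -> all (fun i => i < k.+1) s.
Proof. by apply: sub_all => i /ltnW. Qed.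

Lemma wf_X k f : wf k f -> wf k.+1 (X k f).
Proof.
move=> w; apply/allP => y /mapP [[I J] /(allP w) /and4P[sI sJ aI aJ] ->].
rewrite /wfm /xk /= sI sorted_rcons_lt //= all_ltS //= all_rcons ltnSn all_ltS //.
Qed.

Lemma wf_T k f : wf k f -> wf k.+1 (T k f).
Proof.
move=> w; apply/allP => y /mapP [[I J] /(allP w) /and4P[sI sJ aI aJ] ->].
rewrite /wfm /tk /= sJ sorted_rcons_lt //= all_rcons ltnSn !all_ltS //.
Qed.

Lemma wf_ex k f : wf k f -> wf k (ex f).
Proof.
move=> w; apply/allP => y /mapP [[I J] /(allP w) /and4P[sI sJ aI aJ] ->].
by rewrite /wfm /= sI sJ aI aJ.
Qed.

Lemma wf_cat k f g : wf k f -> wf k g -> wf k (f ++ g).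
Proof. by rewrite /wf all_cat => -> ->. Qed.

Lemma wfm_Q1m k m : wfm k m -> wf k (Q1m m).
Proof.
case: m => I J; rewrite /wfm /= => /and4P[sI sJ aI aJ].
apply/allP => y /mapP [j]; rewrite mem_filter => /andP[jI jJ] ->.
have jk := allP aJ j jJ.
rewrite /wfm /= ltn_sorted_uniq_leq sort_uniq /= jI (sorted_uniq ltn_trans ltnn sI).
rewrite (sort_sorted leq_total) (subseq_sorted ltn_trans (rem_subseq _ _) sJ) /=.
apply/andP; split.
  by apply/allP => i; rewrite mem_sort in_cons => /orP[/eqP->|/(allP aI)].
by apply/allP => i /mem_rem /(allP aJ).
Qed.

Lemma wf_Q1 k f : wf k f -> wf k (Q1 f).
Proof.
move=> w; apply/allP => y /flatten_mapP [m mf ym].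
have := @wfm_Q1m k m (allP w m mf); by move/allP; apply.
Qed.

Lemma Q1m_x k m : wfm k m -> Q1m (xk k m) = rcons (map (xk k) (Q1m m)) (tk k m).
Proof.
case: m => I J; rewrite /wfm /= => /and4P[sI sJ aI aJ].
rewrite /Q1m /xk /tk /= filter_rcons (notin_lt aI) map_rcons -map_comp.
congr rcons.
  apply/eq_in_map => j; rewrite mem_filter => /andP[_ jJ] /=.
  by rewrite rem_rcons_in.
rewrite rem_rcons_notin ?(notin_lt aJ) //.
rewrite (@sort_perm _ (rcons I k)) ?sort_rcons ?sort_id //.
by rewrite perm_sym perm_rcons.
Qed.

Lemma Q1m_t k m : wfm k m -> Q1m (tk k m) = map (tk k) (Q1m m).
Proof.
case: m => I J; rewrite /wfm /= => /and4P[sI sJ aI aJ].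
rewrite /Q1m /tk /= -map_comp.
rewrite (@eq_in_filter _ _ (fun j => j \notin I)); last first.
  by move=> j jJ; rewrite mem_rcons in_cons (ltn_eqF (allP aJ j jJ)).
apply/eq_in_map => j; rewrite mem_filter => /andP[_ jJ] /=.
have -> : j :: rcons I k = rcons (j :: I) k by [].
by rewrite sort_rcons //= (allP aJ j jJ).
Qed.

Lemma Q1_X k f : wf k f -> Q1 (X k f) =R X k (Q1 f) ++ T k f.
Proof.
move=> w; apply: perm_eqR.
have -> : X k (Q1 f) = flatten (map (fun m => map (xk k) (Q1m m)) f).
  by rewrite /X /Q1 map_flatten -map_comp.
have -> : T k f = flatten (map (fun m => [:: tk k m]) f) by rewrite flatten_map1.
have -> : Q1 (X k f) = flatten (map (fun m => map (xk k) (Q1m m) ++ [:: tk k m]) f).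
  rewrite /Q1 /X -map_comp; congr flatten; apply/eq_in_map => m mf /=.
  by rewrite Q1m_x ?(allP w) // cats1.
exact: perm_flatten_cat.
Qed.

Lemma Q1_T k f : wf k f -> Q1 (T k f) = T k (Q1 f).
Proof.
move=> w; rewrite /Q1 /T map_flatten -!map_comp; congr flatten.
by apply/eq_in_map => m mf /=; rewrite Q1m_t ?(allP w).
Qed.

Lemma pairs2_mem K (J : seq nat) : K \in pairs2 J -> all (fun x => x \in J) K.
Proof.
move/allpairsPdep => [a [b [aJ bf ->]]]; move: bf; rewrite mem_filter => /andP[_ bJ] /=.
by rewrite aJ bJ.
Qed.

Lemma pairs2_rcons (J : seq nat) k : all (fun i => i < k) J ->
  perm_eq (pairs2 (rcons J k)) (pairs2 J ++ [seq [:: a; k] | a <- J]).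
Proof.
move=> aJ; rewrite /pairs2 -cats1 map_cat flatten_cat /=.
have -> : [seq b <- J ++ [:: k] | k < b] = [::].
  rewrite filter_cat /= ltnn (@eq_in_filter _ _ pred0) ?filter_pred0 //.
  by move=> b /(allP aJ) bk /=; rewrite ltnNge ltnW.
rewrite /= cats0.
have -> : [seq [seq [:: a; b] | b <- [seq b <- J ++ [:: k] | a < b]] | a <- J] =
          [seq ([seq [:: a; b] | b <- [seq b <- J | a < b]] ++ [:: [:: a; k]]) | a <- J].
  apply/eq_in_map => a aJ'; rewrite filter_cat /= (allP aJ a aJ') map_cat //.
rewrite -(flatten_map1 (fun a => [:: a; k])).
exact: perm_flatten_cat.
Qed.

Lemma perm_eq_in_map (T1 T2 : eqType) (f g : T1 -> T2) s :
  {in s, f =1 g} -> perm_eq (map f s) (map g s).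
Proof. by move/eq_in_map => ->. Qed.

Lemma Pm_x k m : wfm k m ->
  perm_eq (Pm (xk k m)) (map (xk k) (Pm m) ++ map (tk k) (Q1m m)).
Proof.
case: m => I J; rewrite /wfm /= => /and4P[sI sJ aI aJ].
have uJ : uniq J := sorted_uniq ltn_trans ltnn sJ.
rewrite /Pm /xk /=.
apply: (perm_trans (perm_map (fun K => (sort leq (K ++ I), [seq j <- rcons J k | j \notin K]))
  (perm_filter (fun K => disj K I) (@pairs2_rcons J k aJ)))).
rewrite filter_cat map_cat; apply: perm_cat.
  rewrite -map_comp; apply: perm_eq_in_map => K; rewrite mem_filter => /andP[_ KJ] /=.
  congr pair; rewrite filter_rcons.
  have -> : k \notin K.
    apply/negP => kK; have := allP (pairs2_mem _ _ KJ) k kK.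
    by move/(allP aJ); rewrite ltnn.
  by [].
rewrite filter_map.
rewrite (@eq_filter _ _ (fun a => a \notin I)); last first.
  move=> a; rewrite /preim /= /disj /=; move: (@notin_lt I k aI).
  by case: (k \in I) => //=; rewrite andbT.
rewrite /Q1m /= -!map_comp; apply: perm_eq_in_map => a; rewrite mem_filter => /andP[aI' aJ'] /=.
have ak := allP aJ a aJ'.
rewrite /tk /=; congr pair.
  rewrite (@sort_perm _ (rcons (a :: I) k)) ?sort_rcons //= ?ak //.
  by rewrite perm_cons perm_sym perm_rcons.
rewrite filter_rcons !in_cons eqxx orbT /= rem_filter //.
apply: eq_in_filter => j jJ /=; rewrite !in_cons (ltn_eqF (allP aJ j jJ)).
by case: (j == a).
Qed.

Lemma Pm_t k m : wfm k m -> Pm (tk k m) = map (tk k) (Pm m).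
Proof.
case: m => I J; rewrite /wfm /= => /and4P[sI sJ aI aJ].
rewrite /Pm /tk /= -map_comp.
rewrite (@eq_in_filter _ _ (fun K => disj K I)); last first.
  move=> K KJ; rewrite /disj; apply: eq_in_all => x xK.
  have xJ := allP (pairs2_mem _ _ KJ) x xK.
  by rewrite mem_rcons in_cons (ltn_eqF (allP aJ x xJ)).
apply/eq_in_map => K; rewrite mem_filter => /andP[_ KJ] /=.
rewrite -rcons_cat sort_rcons // all_cat aI andbT.
by apply/allP => x /(allP (pairs2_mem _ _ KJ)) /(allP aJ).
Qed.

Lemma P_X k f : wf k f -> P (X k f) =R X k (P f) ++ T k (Q1 f).
Proof.
move=> w; apply: perm_eqR.
have -> : X k (P f) = flatten (map (fun m => map (xk k) (Pm m)) f).
  by rewrite /X /P map_flatten -map_comp.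
have -> : T k (Q1 f) = flatten (map (fun m => map (tk k) (Q1m m)) f).
  by rewrite /T /Q1 map_flatten -map_comp.
apply: (@perm_trans _ (flatten (map (fun m => map (xk k) (Pm m) ++ map (tk k) (Q1m m)) f)));
  last exact: perm_flatten_cat.
rewrite /P /X -map_comp.
elim: f w => //= m f IH /andP[wm w].
by apply: perm_cat; [exact: Pm_x | exact: IH].
Qed.

Lemma P_T k f : wf k f -> P (T k f) = T k (P f).
Proof.
move=> w; rewrite /P /T map_flatten -!map_comp; congr flatten.
by apply/eq_in_map => m mf /=; rewrite Pm_t ?(allP w).
Qed.

Arguments congQ1 {f g}.
Arguments congP {f g}.
Arguments congex {f g}.
Arguments congMap {h f g}.
Arguments Q1_X {k f}.
Arguments P_X {k f}.
Arguments wf_Q1 {k f}.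
Arguments wf_ex {k f}.
Arguments wf_X {k f}.
Arguments wf_T {k f}.
Arguments mulR_x {k f}.
Arguments mulR_t {k f}.
Arguments eqR_sym {f g}.

Lemma coef0 m : coef [::] m = false. Proof. by []. Qed.
Lemma X_cat k f g : X k (f ++ g) = X k f ++ X k g. Proof. exact: map_cat. Qed.
Lemma T_cat k f g : T k (f ++ g) = T k f ++ T k g. Proof. exact: map_cat. Qed.
Lemma ex_X k f : ex (X k f) = T k (ex f).
Proof. by rewrite /ex /X /T -!map_comp. Qed.
Lemma ex_T k f : ex (T k f) = X k (ex f).
Proof. by rewrite /ex /X /T -!map_comp. Qed.
Lemma congX k f g : f =R g -> X k f =R X k g. Proof. exact: congMap. Qed.
Arguments congX k {f g}.
Lemma congT k f g : f =R g -> T k f =R T k g. Proof. exact: congMap. Qed.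
Arguments congT k {f g}.

Ltac bsolve := repeat match goal with |- context [coef ?f ?m] => case: (coef f m) end; by [].

Record Alg (b : elt) : Prop := {
  a1 : Q1 b =R Q1 (ex b);
  a2 : Q1 (ex (Q1 b)) =R b ++ ex b;
  a3 : P (ex (Q1 b)) =R Q1 b;
  a4 : P b =R [::];
  a5 : P (ex b) =R [::];
  a6 : P (Q1 b) =R [::];
  a7 : Q1 (Q1 b) =R [::] }.

Arguments a1 {b}. Arguments a2 {b}. Arguments a3 {b}. Arguments a4 {b}.
Arguments a5 {b}. Arguments a6 {b}. Arguments a7 {b}.

Lemma Alg_ex b : Alg b -> Alg (ex b).
Proof.
case=> h1 h2 h3 h4 h5 h6 h7; split; rewrite ?ex_ex //.
- have e : ex (Q1 (ex b)) =R ex (Q1 b) by apply: congex; apply: eqR_sym.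
  move=> m; rewrite (congQ1 e) h2 !coefD; bsolve.
- have e : ex (Q1 (ex b)) =R ex (Q1 b) by apply: congex; apply: eqR_sym.
  by move=> m; rewrite (congP e) h3 h1.
- by move=> m; rewrite -(congP h1) h6.
- by move=> m; rewrite -(congQ1 h1) h7.
Qed.

Section Derived.
Variables (k : nat) (b : elt).
Hypotheses (wb : wf k b) (Ab : Alg b).

Let wQ := wf_Q1 wb.
Let wE := wf_ex wb.
Let wEQ := wf_ex wQ.

Lemma e1 : Q1 (X k b) =R X k (Q1 b) ++ T k b.
Proof. exact: Q1_X. Qed.

Lemma e2 : ex (Q1 (X k b)) =R T k (ex (Q1 b)) ++ X k (ex b).
Proof. by rewrite -ex_X -ex_T -ex_cat; apply: congex; exact: e1. Qed.

Lemma D0 : Q1 (Q1 (X k b)) =R [::].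
Proof.
move=> m; rewrite (congQ1 e1) Q1_cat coefD (Q1_X wQ) Q1_T // coefD (congX _ (a7 Ab)).
rewrite coef0; bsolve.
Qed.

Lemma D1 : Q1 (ex (Q1 (X k b))) =R Q1 (X k b).
Proof.
move=> m; rewrite (congQ1 e2) Q1_cat coefD Q1_T // (congT _ (a2 Ab)) T_cat coefD.
rewrite (Q1_X wE) coefD (congX _ (eqR_sym (a1 Ab))) e1 !coefD; bsolve.
Qed.

Lemma D2 : P (Q1 (X k b)) =R [::].
Proof.
move=> m; rewrite (congP e1) P_cat coefD (P_X wQ) P_T // !coefD.
rewrite (congX _ (a6 Ab)) (congT _ (a7 Ab)) (congT _ (a4 Ab)) !coef0; bsolve.
Qed.

Lemma D3 : P (ex (Q1 (X k b))) =R [::].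
Proof.
move=> m; rewrite (congP e2) P_cat coefD P_T // (P_X wE) !coefD.
rewrite (congT _ (a3 Ab)) (congX _ (a5 Ab)) (congT _ (eqR_sym (a1 Ab))) !coef0; bsolve.
Qed.

End Derived.

Lemma Step k c : wf k c -> Q1 c =R [::] -> Q1 (ex c) =R c -> P c =R [::] ->
  P (ex c) =R [::] -> Alg (X k c).
Proof.
move=> wc q v pc pe.
have we := wf_ex wc.
have f1 : Q1 (X k c) =R T k c.
  by move=> m; rewrite (Q1_X wc) coefD (congX _ q) coef0.
have f2 : Q1 (T k (ex c)) =R T k c.
  by move=> m; rewrite Q1_T // (congT _ v).
have f3 : ex (Q1 (X k c)) =R X k (ex c).
  by rewrite -ex_T; apply: congex.
split.
- by move=> m; rewrite ex_X f1 f2.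
- move=> m; rewrite (congQ1 f3) (Q1_X we) coefD (congX _ v) coefD ex_X //.
- move=> m; rewrite (congP f3) (P_X we) coefD (congX _ pe) (congT _ v) f1 coef0 //.
- by move=> m; rewrite (P_X wc) coefD (congX _ pc) (congT _ q).
- by move=> m; rewrite ex_X P_T // (congT _ pe).
- by move=> m; rewrite (congP f1) P_T // (congT _ pc).
- by move=> m; rewrite (congQ1 f1) Q1_T // (congT _ q).
Qed.

Lemma cat_self f : f ++ f =R [::].
Proof. by move=> m; rewrite coefD; case: (coef f m). Qed.

Lemma Alg_one : Alg oneR.
Proof.
split; try by [].
exact: eqR_sym (cat_self oneR).
Qed.

Lemma Inv t b : b \in Beven t -> [/\ wf t.*2.+1 b, ex b \in Beven t & Alg b].
Proof.
elim: t b => [|t IH] b.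
  by rewrite /= mem_seq1 => /eqP ->; split => //; exact: Alg_one.
have key : forall b0, b0 \in Beven t ->
  wf t.*2.+2 (Q1 (X t.*2.+1 b0)) /\ mulR b0 (xv t.*2.+1) = X t.*2.+1 b0 /\ Q1 (Q1 (X t.*2.+1 b0)) =R [::] /\
      Q1 (ex (Q1 (X t.*2.+1 b0))) =R Q1 (X t.*2.+1 b0) /\ P (Q1 (X t.*2.+1 b0)) =R [::]
      /\ P (ex (Q1 (X t.*2.+1 b0))) =R [::].
  move=> b0 /IH [w0 _ A0]; split; last split; last split; last split; last split.
  - exact: wf_Q1 (wf_X w0).
  - exact: mulR_x w0.
  - exact: D0.
  - exact: D1.
  - exact: D2.
  - exact: D3.
rewrite /= mem_cat => /orP[] /mapP [b0 b0in ->]; have [wc [mx [q [v [pc pe]]]]] := key b0 b0in;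
  rewrite mx ?(mulR_x wc) ?(mulR_t (wf_ex wc)).
- split.
  + by rewrite doubleS; apply: wf_X.
  + rewrite ex_X mem_cat; apply/orP; right; apply/mapP; exists b0 => //.
    by rewrite mx (mulR_t (wf_ex wc)).
  + exact: Step.
- split.
  + by rewrite doubleS; apply: wf_T; apply: wf_ex.
  + rewrite ex_T ex_ex mem_cat; apply/orP; left; apply/mapP; exists b0 => //.
    by rewrite mx (mulR_x wc).
  + rewrite -ex_X; apply: Alg_ex; exact: Step.
Qed.

Theorem mainTheorem10 (t : nat) (b : elt) :
  b \in B t.*2 ->
  inB t.*2 (ex b) /\
  (* (i) *)   Q1 b =R Q1 (ex b) /\
  (* (ii) *)  Q1 (ex (Q1 b)) =R addR b (ex b) /\
  (* (iii) *) P (ex (Q1 b)) =R Q1 b /\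
  (* (iv) *)  (P b =R zeroR /\ P (ex b) =R zeroR) /\
  (* (v) *)   Q1 (ex (Q1 (mulR b (xv t.*2.+1)))) =R Q1 (mulR b (xv t.*2.+1)) /\
  (* (vi) *)  P (Q1 (mulR b (xv t.*2.+1))) =R zeroR /\
  (* (vii) *) P (ex (Q1 (mulR b (xv t.*2.+1)))) =R zeroR.
Proof.
rewrite /B odd_double doubleK => bin.
have [wb eb Ab] := Inv _ _ bin.
rewrite (mulR_x wb).
split; first by exists (ex b); rewrite /B ?odd_double ?doubleK.
split; first exact: (a1 Ab).
split; first exact: (a2 Ab).
split; first exact: (a3 Ab).
split; first by split; [exact: (a4 Ab) | exact: (a5 Ab)].
split; first exact: D1.
split; first exact: D2.
exact: D3.
Qed.
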